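(* Let $F\ge1$, $N_{\max}\ge1$. Consider finite sets $A=\{(s_j,x_j,E_j)\}$ of triples with $s_j\in\mathbb{R}^F$, $x_j\in\mathbb{R}^{1\times3}$, $E_j\in\mathbb{R}^{3\times 3}$, with $|A|\le N_{\max}$ and with the $x_j$ pairwise distinct within $A$; write $\pi(A)=\{(s_j,x_j):(s_j,x_j,E_j)\in A\}$. There exist an integer $D$, a function $\varphi:\mathbb{R}^{3+9+F}\to\mathbb{R}^D$ and a function $\rho$ on $\mathbb{R}^D$ such that for every invertible $E\in\mathbb{R}^{3\times3}$ and all such sets $A,A'$, $$\rho\Big(\sum_{(s,x,E')\in A}\varphi\big(\mathrm{Concatenate}(xE^T,\,E'E^T,\,s)\big)\Big)=\rho\Big(\sum_{(s,x,E')\in A'}\varphi\big(\mathrm{Concatenate}(xE^T,\,E'E^T,\,s)\big)\Big)$$ implies $\pi(A)=\pi(A')$.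
   Context: $\mathrm{Concatenate}(xE^T,E'E^T,s)$ denotes the concatenation of the entries of $xE^T\in\mathbb{R}^{1\times 3}$, of the flattened matrix $E'E^T\in\mathbb{R}^{3\times 3}$ (the projection of the neighbour frame $E'$ onto the center frame $E$), and of $s\in\mathbb{R}^F$. *)

(* Defs.v *)
From HB Require Import structures.
From mathcomp Require Import all_boot all_order all_algebra.
From mathcomp Require Import reals.
Set Implicit Arguments. Unset Strict Implicit. Unset Printing Implicit Defensive.
Import Order.TTheory GRing.Theory Num.Theory.
Local Open Scope ring_scope.

Definition triple (R : realType) (F : nat) : Type :=
  ('rV[R]_F * 'rV[R]_3 * 'M[R]_3)%type.

Definition tr_s (R : realType) (F : nat) (t : triple R F) : 'rV[R]_F := t.1.1.
Definition tr_x (R : realType) (F : nat) (t : triple R F) : 'rV[R]_3 := t.1.2.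
Definition tr_E (R : realType) (F : nat) (t : triple R F) : 'M[R]_3 := t.2.

Definition tr_pi (R : realType) (F : nat) (t : triple R F) : ('rV[R]_F * 'rV[R]_3)%type :=
  (tr_s t, tr_x t).

Definition concatenate (R : realType) (F : nat) (E : 'M[R]_3) (t : triple R F) : 'rV[R]_(3 + 9 + F) :=
  row_mx (tr_x t *m E^T) (row_mx (mxvec (tr_E t *m E^T)) (tr_s t)).

(* A finite set of triples, represented by a duplicate-free list, with
   pairwise distinct positions x_j and at most Nmax elements. *)
Definition admissible (R : realType) (F : nat) (Nmax : nat) (A : seq (triple R F)) : Prop :=
  uniq (map (@tr_x R F) A) /\ (size A <= Nmax)%N.

(* Main.v *)
Require Import Defs.
From HB Require Import structures.
From mathcomp Require Import all_boot all_order all_algebra.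
From mathcomp Require Import reals.
Import Order.TTheory GRing.Theory Num.Theory.
Set Implicit Arguments. Unset Strict Implicit. Unset Printing Implicit Defensive.
Local Open Scope ring_scope.

Definition ext (R : realType) (n : nat) (v : 'rV[R]_n) (j : 'I_n.+1) : R :=
  if unlift ord_max j is Some k then v 0 k else 1.

Definition mono (R : realType) (n M : nat) (v : 'rV[R]_n)
  (f : {ffun 'I_M -> 'I_n.+1}) : R := \prod_i ext v (f i).

Definition Dn (n M : nat) : nat := #|{ffun 'I_M -> 'I_n.+1}|.

Definition fv (n M : nat) (k : 'I_(Dn n M)) : {ffun 'I_M -> 'I_n.+1} :=
  @enum_val _ (mem predT) k.

Definition phiM (R : realType) (n M : nat) (v : 'rV[R]_n) : 'rV[R]_(Dn n M) :=
  \row_k mono v (@fv n M k).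

Definition Lf (R : realType) (n : nat) (w : 'I_n.+1 -> R) (v : 'rV[R]_n) : R :=
  \sum_j w j * ext v j.

Definition Pw (R : realType) (n M : nat) (w : 'I_M -> 'I_n.+1 -> R) (v : 'rV[R]_n) : R :=
  \prod_i Lf (w i) v.

Lemma key (R : realType) (n M : nat) (w : 'I_M -> 'I_n.+1 -> R) :
  exists c : 'rV[R]_(Dn n M), forall v,
    \sum_k c 0 k * phiM M v 0 k = Pw w v.
Proof.
exists (\row_k \prod_i w i (@fv n M k i)) => v.
rewrite /Pw /Lf bigA_distr_bigA /=.
rewrite [X in _ = X](big_enum_val (A := predT)) /=.
apply: eq_bigr => k _; rewrite !mxE /mono -big_split /=.
by [].
Qed.

Lemma sum1 (R : realType) (m : nat) (a : 'I_m) (x : R) (g : 'I_m -> R) :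
  \sum_j (j == a)%:R * x * g j = x * g a.
Proof.
rewrite (bigD1 a) //= eqxx mul1r big1 ?addr0 // => j /negbTE ->.
by rewrite !mul0r.
Qed.

Lemma ext_lift (R : realType) n (v : 'rV[R]_n) k : ext v (lift ord_max k) = v 0 k.
Proof. by rewrite /ext liftK. Qed.

Lemma ext_max (R : realType) n (v : 'rV[R]_n) : ext v ord_max = 1.
Proof. by rewrite /ext unlift_none. Qed.

Definition form (R : realType) n (u0 u : 'rV[R]_n) : 'I_n.+1 -> R :=
  if [pick k | u 0 k != u0 0 k] is Some k then
    fun j => (j == lift ord_max k)%:R * (u0 0 k - u 0 k)^-1
           + (j == ord_max)%:R * (- (u 0 k / (u0 0 k - u 0 k)))
  else fun j => (j == ord_max)%:R * 1.

Lemma Lf_form_u0 (R : realType) n (u0 u : 'rV[R]_n) : Lf (form u0 u) u0 = 1.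
Proof.
rewrite /Lf /form; case: pickP => [k Hk|_].
  under eq_bigr do rewrite mulrDl.
  rewrite big_split /= !sum1 ext_lift ext_max mulr1.
  rewrite mulrC -mulrBl divff //.
  by rewrite subr_eq0 eq_sym.
by rewrite sum1 ext_max mulr1.
Qed.

Lemma Lf_form_u (R : realType) n (u0 u : 'rV[R]_n) : u != u0 -> Lf (form u0 u) u = 0.
Proof.
move=> Hne; rewrite /Lf /form; case: pickP => [k Hk|H].
  under eq_bigr do rewrite mulrDl.
  rewrite big_split /= !sum1 ext_lift ext_max mulr1.
  by rewrite mulrC subrr.
exfalso; move/eqP: Hne; apply; apply/matrixP => i j.
rewrite (ord1 i); move: (H j) => /= /negbT; by rewrite negbK => /eqP.
Qed.

Lemma interp (R : realType) n M (u0 : 'rV[R]_n) (V : seq 'rV[R]_n) :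
  (size V <= M)%N -> exists w : 'I_M -> 'I_n.+1 -> R,
    forall u, u \in u0 :: V -> Pw w u = (u == u0)%:R.
Proof.
move=> HV; exists (fun i => form u0 (nth u0 V i)) => u Hu.
case: (eqVneq u u0) => [->|Hne].
  by rewrite /Pw big1 // => i _; rewrite Lf_form_u0.
have HuV : u \in V by move: Hu; rewrite inE (negbTE Hne).
have Hi : (index u V < M)%N by apply: leq_trans HV; rewrite index_mem.
rewrite /Pw (bigD1 (Ordinal Hi)) //= nth_index // Lf_form_u //.
by rewrite mul0r.
Qed.

Lemma sum_count (R : realType) (T : Type) (b : pred T) (s : seq T) :
  \sum_(t <- s) (b t)%:R = (count b s)%:R :> R.
Proof.
elim: s => [|a s IH]; first by rewrite big_nil.
by rewrite big_cons IH /= natrD.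
Qed.

Lemma conc_inj (R : realType) F (E : 'M[R]_3) (t t' : triple R F) :
  E \in unitmx -> concatenate E t = concatenate E t' -> tr_pi t = tr_pi t'.
Proof.
move=> HE; rewrite /concatenate => H; have [h1 h2] := @eq_row_mx R 1 3 (3 * 3 + F) _ _ _ _ H.
have [_ h3] := eq_row_mx h2.
rewrite /tr_pi h3; congr pair.
have := congr1 (mulmx^~ (invmx E^T)) h1.
by rewrite /= !mulmxK // unitmx_tr.
Qed.

Lemma onedir (R : realType) (F Nmax : nat) (E : 'M[R]_3) (A A' : seq (triple R F)) :
  E \in unitmx -> (size A <= Nmax)%N -> (size A' <= Nmax)%N ->
  \sum_(t <- A) phiM (Nmax + Nmax) (concatenate E t) =
  \sum_(t <- A') phiM (Nmax + Nmax) (concatenate E t) ->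
  forall p, p \in map (@tr_pi R F) A -> p \in map (@tr_pi R F) A'.
Proof.
move=> HE HA HA' Hs p /mapP [t0 Ht0 ->].
set vt := (@concatenate R F E).
have Hsz : (size (map vt (A ++ A')) <= Nmax + Nmax)%N.
  by rewrite size_map size_cat leq_add.
have [w Hw] := interp (vt t0) Hsz.
have [c Hc] := key w.
have Hlin : forall B : seq (triple R F),
  \sum_k c 0 k * (\sum_(t <- B) phiM (Nmax + Nmax) (vt t)) 0 k =
  \sum_(t <- B) Pw w (vt t).
  move=> B; under eq_bigr do rewrite summxE mulr_sumr.
  rewrite exchange_big /=; apply: eq_bigr => t _; exact: Hc.
have := congr1 (fun y : 'rV[R]_(Dn (3 + 9 + F) (Nmax + Nmax)) => \sum_k c 0 k * y 0 k) Hs.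
rewrite /= !Hlin.
rewrite (eq_big_seq (fun t => (vt t == vt t0)%:R)); last first.
  by move=> t Ht; rewrite Hw // inE map_f ?orbT // mem_cat Ht.
rewrite [in X in _ = X](eq_big_seq (fun t => (vt t == vt t0)%:R)); last first.
  by move=> t Ht; rewrite Hw // inE map_f ?orbT // mem_cat Ht orbT.
rewrite !(@sum_count R _ (fun t => vt t == vt t0)) => /eqP; rewrite eqr_nat => /eqP Hc'.
have : has (fun t => vt t == vt t0) A' by rewrite has_count -Hc' -has_count; apply/hasP; exists t0.
case/hasP => t' Ht' /eqP Heq.
by rewrite -(conc_inj HE Heq) map_f.
Qed.

Theorem proposition5 (R : realType) (F Nmax : nat) :
  (1 <= F)%N -> (1 <= Nmax)%N ->
  exists (D D' : nat) (phi : 'rV[R]_(3 + 9 + F) -> 'rV[R]_D)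
         (rho : 'rV[R]_D -> 'rV[R]_D'),
    forall (E : 'M[R]_3) (A A' : seq (triple R F)),
      E \in unitmx -> admissible Nmax A -> admissible Nmax A' ->
      rho (\sum_(t <- A) phi (concatenate E t)) =
      rho (\sum_(t <- A') phi (concatenate E t)) ->
      map (@tr_pi R F) A =i map (@tr_pi R F) A'.
Proof.
move=> _ _.
exists (Dn (3 + 9 + F) (Nmax + Nmax)), (Dn (3 + 9 + F) (Nmax + Nmax)),
  (@phiM R (3 + 9 + F) (Nmax + Nmax)), id.
move=> E A A' HE [_ HA] [_ HA'] /= Hs p; apply/idP/idP.
  exact: onedir HE HA HA' Hs p.
exact: onedir HE HA' HA (esym Hs) p.
Qed.
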